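(* Let $\mathcal H$ be a complex pre-Hilbert space, let $M\in\mathbb N$, and for $j=1,\ldots,M$ let $a_j,b_j:\mathcal H\to\mathcal H$ be linear operators that possess adjoints $a_j^*,b_j^*:\mathcal H\to\mathcal H$ (i.e. $(a_j\varphi,\psi)=(\varphi,a_j^*\psi)$ and $(b_j\varphi,\psi)=(\varphi,b_j^*\psi)$ for all $\varphi,\psi\in\mathcal H$). Then, in the sense of quadratic forms on $\mathcal H$, \[ \pm\sum_{j,k=1}^M a_j^*b_k^*b_ja_k\;\leq\;\sum_{j,k=1}^M a_j^*b_k^*b_ka_j , \] that is, for every $\varphi\in\mathcal H$ and each choice of sign, $\pm\big(\varphi,\sum_{j,k} a_j^*b_k^*b_ja_k\varphi\big)\le \big(\varphi,\sum_{j,k} a_j^*b_k^*b_ka_j\varphi\big)$ (both sides being real).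
   Context: For operators $S,T$ on $\mathcal H$, $S\le T$ means $(\varphi,S\varphi)\le(\varphi,T\varphi)$ for all $\varphi\in\mathcal H$. *)

(* Defs.v *)
From HB Require Import structures.
From mathcomp Require Import all_boot all_order all_algebra.
From mathcomp Require Import reals complex.
Set Implicit Arguments. Unset Strict Implicit. Unset Printing Implicit Defensive.
Import Order.TTheory GRing.Theory Num.Theory.
Local Open Scope ring_scope.

(* A complex pre-Hilbert space is a C-vector space H (lmodType R[i]) with an
   inner product ( , ) that is conjugate-linear in the FIRST argument and
   linear in the SECOND (physics convention, as in (phi, T phi)),
   conjugate symmetric and positive definite. *)
Definition is_inner_product (R : realType) (H : lmodType R[i])
    (ip : H -> H -> R[i]) : Prop :=
  [/\ (forall (x y z : H) (c : R[i]), ip x (c *: y + z) = c * ip x y + ip x z),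
      (forall x y : H, ip y x = (ip x y)^*),
      (forall x : H, 0 <= ip x x) &
      (forall x : H, ip x x = 0 -> x = 0)].

Definition is_adjoint (R : realType) (H : lmodType R[i])
    (ip : H -> H -> R[i]) (T Ts : H -> H) : Prop :=
  forall phi psi : H, ip (T phi) psi = ip phi (Ts psi).

(* Main.v *)
Require Import Defs.
From HB Require Import structures.
From mathcomp Require Import all_boot all_order all_algebra.
From mathcomp Require Import reals complex.
From mathcomp Require Import ring.
Import Order.TTheory GRing.Theory Num.Theory.
Local Open Scope ring_scope.

Section Aux.
Variables (R : realType) (H : lmodType R[i]) (ip : H -> H -> R[i]).
Hypothesis Hip : is_inner_product ip.

Lemma ipDr x y z : ip x (y + z) = ip x y + ip x z.
Proof. case: (Hip : [/\ _, _, _ & _]) => L _ _ _. by have := L x y z 1; rewrite scale1r mul1r. Qed.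
Lemma ip0r x : ip x 0 = 0.
Proof.
by have := ipDr x 0 0; rewrite addr0 => /(canLR (addrK _)); rewrite subrr.
Qed.
Lemma ipNr x y : ip x (- y) = - ip x y.
Proof. case: (Hip : [/\ _, _, _ & _]) => L _ _ _.
by rewrite -(addr0 (- y)) -scaleN1r L ip0r addr0 mulN1r. Qed.
Lemma ipDl x y z : ip (y + z) x = ip y x + ip z x.
Proof. case: (Hip : [/\ _, _, _ & _]) => _ C _ _. by rewrite (C x (y+z)) (C x y) (C x z) ipDr rmorphD. Qed.
Lemma ipNl x y : ip (- y) x = - ip y x.
Proof. case: (Hip : [/\ _, _, _ & _]) => _ C _ _. by rewrite (C x (-y)) (C x y) ipNr rmorphN. Qed.
Lemma ipsumr x n (F : 'I_n -> H) : ip x (\sum_(i < n) F i) = \sum_(i < n) ip x (F i).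
Proof. exact: (big_morph (ip x) (ipDr x) (ip0r x)). Qed.
End Aux.
Arguments ipDr {R H ip}.
Arguments ip0r {R H ip}.
Arguments ipNr {R H ip}.
Arguments ipDl {R H ip}.
Arguments ipNl {R H ip}.
Arguments ipsumr {R H ip}.

Lemma dsplit (V : zmodType) M (F G : 'I_M -> 'I_M -> V) :
  \sum_(i < M) \sum_(j < M) (F i j + G i j) =
  \sum_(i < M) \sum_(j < M) F i j + \sum_(i < M) \sum_(j < M) G i j.
Proof. under eq_bigr do rewrite big_split. exact: big_split. Qed.
Lemma dscale (V : comRingType) M (s : V) (F : 'I_M -> 'I_M -> V) :
  \sum_(i < M) \sum_(j < M) (s * F i j) = s * \sum_(i < M) \sum_(j < M) F i j.
Proof. rewrite mulr_sumr; apply: eq_bigr => i _; by rewrite mulr_sumr. Qed.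

Theorem lemma3p2 (R : realType) (H : lmodType R[i]) (ip : H -> H -> R[i])
  (Hip : is_inner_product ip) (M : nat)
  (a b : 'I_M -> {linear H -> H}) (as_ bs : 'I_M -> H -> H)
  (Ha : forall j, is_adjoint ip (a j) (as_ j))
  (Hb : forall j, is_adjoint ip (b j) (bs j))
  (phi : H) :
  let lhs := ip phi (\sum_(j < M) \sum_(k < M) as_ j (bs k (b j (a k phi)))) in
  let rhs := ip phi (\sum_(j < M) \sum_(k < M) as_ j (bs k (b k (a j phi)))) in
  lhs <= rhs /\ - lhs <= rhs.
Proof.
move=> lhs rhs.
pose v j k := b j (a k phi).
have Elhs : lhs = \sum_(j < M) \sum_(k < M) ip (v k j) (v j k).
  rewrite /lhs (ipsumr Hip); apply: eq_bigr => j _; rewrite (ipsumr Hip).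
  by apply: eq_bigr => k _; rewrite -Ha -Hb.
have Erhs : rhs = \sum_(j < M) \sum_(k < M) ip (v k j) (v k j).
  rewrite /rhs (ipsumr Hip); apply: eq_bigr => j _; rewrite (ipsumr Hip).
  by apply: eq_bigr => k _; rewrite -Ha -Hb.
have Ef : \sum_(j < M) \sum_(k < M) ip (v j k) (v k j) = lhs.
  by rewrite Elhs exchange_big.
have Eg : \sum_(j < M) \sum_(k < M) ip (v j k) (v j k) = rhs.
  by rewrite Erhs exchange_big.
have pos : forall x, 0 <= ip x x by case: Hip.
have key : forall s : R[i], s = 1 \/ s = -1 ->
    0 <= \sum_(j < M) \sum_(k < M) ip (v k j + s *: v j k) (v k j + s *: v j k).
  by move=> s _; apply: sumr_ge0 => j _; apply: sumr_ge0 => k _; apply: pos.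
have ipZl : forall (c : R[i]) x y, c^* = c -> ip (c *: x) y = c * ip x y.
  move=> c x y cc; case: (Hip : [/\ _, _, _ & _]) => L C _ _.
  by rewrite (C y (c *: x)) (C y x) -(addr0 (c *: x)) L (ip0r Hip) addr0 -{2}cc rmorphM.
have ipZr : forall (c : R[i]) x y, ip x (c *: y) = c * ip x y.
  move=> c x y; case: (Hip : [/\ _, _, _ & _]) => L _ _ _.
  by rewrite -(addr0 (c *: y)) L (ip0r Hip) addr0.
have expand : forall s : R[i], s^* = s -> s * s = 1 ->
    \sum_(j < M) \sum_(k < M) ip (v k j + s *: v j k) (v k j + s *: v j k)
    = (rhs + s * lhs) * 2.
  move=> s sc ss.
  transitivity (\sum_(j < M) \sum_(k < M) (ip (v k j) (v k j) + s * ip (v k j) (v j k)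
      + (s * ip (v j k) (v k j) + ip (v j k) (v j k)))).
    apply: eq_bigr => j _; apply: eq_bigr => k _.
    rewrite (ipDl Hip) !(ipDr Hip) !ipZl // !ipZr mulrA ss mul1r.
    ring.
  rewrite !dsplit !dscale Eg Ef -Erhs -Elhs.
  ring.
split.
- rewrite -subr_ge0.
  have := key (-1) (or_intror erefl).
  rewrite expand ?rmorphN ?rmorph1 ?mulN1r ?opprK ?mul1r //.
  by rewrite pmulr_lge0 // ltr0n.
- rewrite -subr_ge0 opprK.
  have := key 1 (or_introl erefl).
  rewrite expand ?rmorph1 ?mul1r //.
  by rewrite pmulr_lge0 // ltr0n addrC.
Qed.
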